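(* Consider the cyclically closed $2\times2\times M$ Ising-type model described in the context, with real couplings $J_1,\dots,J_5$, temperature $T>0$ and $\beta=1/(k_BT)$. Set $p_1=e^{\beta J_1}$, $q_1=e^{\beta J_2}$, $q_2=e^{2\beta J_3}$, $u_1=e^{\beta J_4}$, $v_1=e^{4\beta J_5}$ and $$\lambda_{\max}=4p_1^2u_1^{-2}v_1^{-1}+4u_1^2p_1^{-2}v_1^{-1}+4v_1q_2^{-2}+2q_2^2v_1q_1^{-4}+q_1^4q_2^2v_1p_1^{-4}u_1^{-4}+p_1^4q_1^4q_2^2u_1^4v_1 .$$ Then the free energy per site $f(T)=-k_BT\lim_{M\to\infty}\frac{1}{4M}\ln Z_M$ equals $-\frac{k_BT}{4}\ln\lambda_{\max}$, the internal energy per site $u(T)=-T^2\partial_T[f/T]$ equals $k_BT^2\partial_T[\frac14\ln\lambda_{\max}]$, and the heat capacity per site $C=\partial_T u$ equals $2k_BT\partial_T[\frac14\ln\lambda_{\max}]+k_BT^2\partial_T^2[\frac14\ln\lambda_{\max}]$.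
   Context: Sites $t_i^m$, $i\in\{0,1,2,3\}$ (indices mod 4), $m\in\{0,\dots,M-1\}$, cyclically closed ($t_i^M\equiv t_i^0$), spins $\sigma_i^m\in\{-1,1\}$. The cube energy is $$\mathcal H^m=-\sum_{r=0}^{3}\Big(J_1\sigma_r^m\sigma_r^{m+1}+J_2\sigma_r^m\sigma_{r+1}^m\sigma_r^{m+1}\sigma_{r+1}^{m+1}+J_3\sigma_r^m\sigma_{r+2}^m\sigma_r^{m+1}\sigma_{r+2}^{m+1}+J_4\prod_{i\ne r}\sigma_i^m\sigma_i^{m+1}+J_5\prod_{i=0}^3\sigma_i^m\sigma_i^{m+1}\Big),$$ $\mathcal H=\sum_{m=0}^{M-1}\mathcal H^m$, and $Z_M=\sum_{\sigma\in\{-1,1\}^{4M}}e^{-\beta\mathcal H(\sigma)}$. *)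

(* Defs.v *)
From HB Require Import structures.
From mathcomp Require Import all_boot all_order all_algebra.
From mathcomp Require Import all_classical all_reals all_analysis.
Set Implicit Arguments. Unset Strict Implicit. Unset Printing Implicit Defensive.
Import Order.TTheory GRing.Theory Num.Theory.
Import numFieldNormedType.Exports.
Local Open Scope classical_set_scope.
Local Open Scope ring_scope.

Section Model.
Variable R : realType.

Definition spin (b : bool) : R := if b then 1 else -1.

(* a configuration: sigma_i^m = spin (s (m, i)), m : 'I_M, i : 'I_4,
   with cyclic successor ordS (so t_i^M = t_i^0 and indices of i mod 4). *)
Definition config (M : nat) := {ffun 'I_M * 'I_4 -> bool}.

Definition sg (M : nat) (s : config M) (m : 'I_M) (i : 'I_4) : R := spin (s (m, i)).

Definition Hcube (J1 J2 J3 J4 J5 : R) (M : nat) (s : config M) (m : 'I_M) : R :=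
  let m' := ordS m in
  - \sum_(r < 4)
      (J1 * sg s m r * sg s m' r
     + J2 * sg s m r * sg s m (ordS r) * sg s m' r * sg s m' (ordS r)
     + J3 * sg s m r * sg s m (ordS (ordS r)) * sg s m' r * sg s m' (ordS (ordS r))
     + J4 * \prod_(i < 4 | i != r) (sg s m i * sg s m' i)
     + J5 * \prod_(i < 4) (sg s m i * sg s m' i)).

Definition Htot (J1 J2 J3 J4 J5 : R) (M : nat) (s : config M) : R :=
  \sum_(m < M) Hcube J1 J2 J3 J4 J5 s m.

Definition Zpart (J1 J2 J3 J4 J5 beta : R) (M : nat) : R :=
  \sum_(s : config M) expR (- beta * Htot J1 J2 J3 J4 J5 s).

Definition betaT (kB T : R) : R := 1 / (kB * T).

Definition lambda_max (kB J1 J2 J3 J4 J5 T : R) : R :=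
  let b := betaT kB T in
  let p1 := expR (b * J1) in
  let q1 := expR (b * J2) in
  let q2 := expR (2 * b * J3) in
  let u1 := expR (b * J4) in
  let v1 := expR (4 * b * J5) in
  4 * p1 ^+ 2 * u1 ^- 2 * v1 ^-1 + 4 * u1 ^+ 2 * p1 ^- 2 * v1 ^-1
  + 4 * v1 * q2 ^- 2 + 2 * q2 ^+ 2 * v1 * q1 ^- 4
  + q1 ^+ 4 * q2 ^+ 2 * v1 * p1 ^- 4 * u1 ^- 4
  + p1 ^+ 4 * q1 ^+ 4 * q2 ^+ 2 * u1 ^+ 4 * v1.

Definition lnZ_seq (kB J1 J2 J3 J4 J5 T : R) (M : nat) : R :=
  ln (Zpart J1 J2 J3 J4 J5 (betaT kB T) M) / (4 * M%:R).

Definition free_energy (kB J1 J2 J3 J4 J5 T : R) : R :=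
  - kB * T * lim (lnZ_seq kB J1 J2 J3 J4 J5 T @ \oo).

Definition internal_energy (kB J1 J2 J3 J4 J5 T : R) : R :=
  - T ^+ 2 * derive1 (fun t => free_energy kB J1 J2 J3 J4 J5 t / t) T.

Definition heat_capacity (kB J1 J2 J3 J4 J5 T : R) : R :=
  derive1 (internal_energy kB J1 J2 J3 J4 J5) T.

Definition quarter_ln_lambda (kB J1 J2 J3 J4 J5 : R) : R -> R :=
  fun t => ln (lambda_max kB J1 J2 J3 J4 J5 t) / 4.

End Model.

(* Main.v *)
Require Import Defs.
From HB Require Import structures.
From mathcomp Require Import all_boot all_order all_algebra.
From mathcomp Require Import all_classical all_reals all_analysis.
From mathcomp Require Import ring lra zify.
Import Order.TTheory GRing.Theory Num.Theory.
Import numFieldNormedType.Exports.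
Local Open Scope classical_set_scope.
Local Open Scope ring_scope.

Set Implicit Arguments. Unset Strict Implicit. Unset Printing Implicit Defensive.
Section A.
Variable R : realType.
Variables J1 J2 J3 J4 J5 : R.
Local Notation X := {ffun 'I_4 -> bool}.

Definition sgn (b : bool) : R := if b then -1 else 1.
Definition En (d : X) : R := \sum_(r < 4)
  (J1 * sgn (d r) + J2 * sgn (d r) * sgn (d (ordS r))
   + J3 * sgn (d r) * sgn (d (ordS (ordS r)))
   + J4 * \prod_(i < 4 | i != r) sgn (d i) + J5 * \prod_(i < 4) sgn (d i)).
Definition wt (b : R) (d : X) : R := expR (En d * b).
Definition Lam (b : R) : R := \sum_(d : X) wt b d.
Definition dif M (s : config M) (m : 'I_M) : X :=
  [ffun i => s (m, i) (+) s (ordS m, i)].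

Lemma spinM a b : spin R a * spin R b = sgn (a (+) b).
Proof. by case: a; case: b; rewrite /= ?mulr1 ?mul1r ?mulrNN ?mulr1. Qed.

Lemma Hcube_dif M (s : config M) m : Hcube J1 J2 J3 J4 J5 s m = - En (dif s m).
Proof.
rewrite /Hcube /En; congr (- _); apply: eq_bigr => r _.
have P (P : pred 'I_4) : \prod_(i < 4 | P i) (sg R s m i * sg R s (ordS m) i)
   = \prod_(i < 4 | P i) sgn (dif s m i).
  by apply: eq_bigr => i _; rewrite ffunE /sg spinM.
rewrite !P /sg !ffunE -!spinM; ring.
Qed.

Lemma Zpart_prod b M : Zpart J1 J2 J3 J4 J5 b M =
  \sum_(s : config M) \prod_(m < M) wt b (dif s m).
Proof.
apply: eq_bigr => s _; rewrite /Htot (eq_bigr _ (fun m _ => Hcube_dif s m)).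
rewrite sumrN mulNr mulrN opprK mulr_sumr expR_sum.
by apply: eq_bigr => m _; rewrite /wt mulrC.
Qed.

Lemma wt_gt0 b d : 0 < wt b d.
Proof. exact: expR_gt0. Qed.

Lemma Lam_gt0 b : 0 < Lam b.
Proof.
rewrite /Lam (bigD1 [ffun=> false]) //=.
apply: ltr_wpDr; first by apply: sumr_ge0 => d _; apply/ltW/wt_gt0.
exact: wt_gt0.
Qed.

Lemma wt_le_Lam b d : wt b d <= Lam b.
Proof.
rewrite /Lam (bigD1 d) //= lerDl; apply: sumr_ge0 => e _; apply/ltW/wt_gt0.
Qed.

Definition cmin (b : R) : R := \big[Order.min/1]_(d : X) wt b d.

Lemma cmin_gt0 b : 0 < cmin b.
Proof.
rewrite /cmin; apply: (big_ind (fun x => 0 < x)) => //.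
  by move=> x y hx hy; rewrite lt_min hx hy.
move=> d _; exact: wt_gt0.
Qed.

Lemma cmin_le b d : cmin b <= wt b d.
Proof. exact: bigmin_le. Qed.

Definition psi n (t : config n.+1) : config n.+1 :=
  [ffun p : 'I_n.+1 * 'I_4 => \big[addb/false]_(k < n.+1 | (p.1 <= k)%N) t (k, p.2)].

Lemma ordS_val n (m : 'I_n.+1) : m != ord_max -> val (ordS m) = m.+1.
Proof.
move=> hm; rewrite /= modn_small //.
have := ltn_ord m; move: hm; rewrite -(inj_eq val_inj) /=; lia.
Qed.

Lemma psi_split n (t : config n.+1) m i :
  psi t (m, i) = t (m, i) (+) (if m != ord_max then psi t (ordS m, i) else false).
Proof.
rewrite [LHS]ffunE /= (bigD1 m) //=; congr (_ (+) _).
case: eqP => [->|/eqP ne] /=.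
  rewrite big_pred0 // => k /=; apply/negbTE; apply/negP => /andP[h1 h2].
  move: h2; rewrite -(inj_eq val_inj) /=; have := ltn_ord k; lia.
rewrite ffunE /=; apply: eq_bigl => k /=.
have := ordS_val ne; rewrite /= => ->.
rewrite -(inj_eq val_inj) /=; lia.
Qed.

Lemma psi_inj n : injective (@psi n).
Proof.
move=> t t' E; apply/ffunP => -[m i].
have h1 := psi_split t m i; have h2 := psi_split t' m i.
rewrite E in h1; move: h1 h2.
case: (m != ord_max) => /=; [set c := psi t' (ordS m, i) | set c := false];
by case: (psi t' (m, i)); case: (t (m, i)); case: (t' (m, i)); case: c.
Qed.

Definition row M (t : config M) (m : 'I_M) : X := [ffun i => t (m, i)].

Lemma dif_psi n (t : config n.+1) m : m != ord_max -> dif (psi t) m = row t m.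
Proof.
move=> hm; apply/ffunP => i; rewrite /dif /row [in LHS]ffunE [in RHS]ffunE psi_split hm /=.
by case: (t (m, i)); case: (psi t (ordS m, i)).
Qed.

Definition cur M (t : config M) : {ffun 'I_M -> X} := [ffun m => row t m].
Definition uncur M (g : {ffun 'I_M -> X}) : config M := [ffun p => g p.1 p.2].

Lemma sumG b n : \sum_(t : config n.+1) \prod_(m < n.+1 | m != ord_max) wt b (row t m)
  = #|X|%:R * Lam b ^+ n.
Proof.
rewrite (reindex (@uncur n.+1)) /=; last first.
  apply: onW_bij; exists (@cur n.+1) => [t|g]; apply/ffunP.
    by move=> m; apply/ffunP => i; rewrite !ffunE.
  by move=> [m i]; rewrite !ffunE.
have E g : \prod_(m < n.+1 | m != ord_max) wt b (row (uncur g) m)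
   = \prod_(m < n.+1) (fun m x => if m != ord_max then wt b x else 1) m (g m).
  rewrite big_mkcond; apply: eq_bigr => m _ /=; case: ifP => // _.
  by congr (wt b _); apply/ffunP => i; rewrite !ffunE.
rewrite (eq_bigr _ (fun g _ => E g)) -(bigA_distr_bigA (fun m x => if m != ord_max then wt b x else 1)) /=.
rewrite (bigD1 ord_max) //= eqxx /= sumr_const.
rewrite (eq_bigr (fun _ => Lam b)); last by move=> m ->.
rewrite prodr_const; congr (_ * _ ^+ _).
transitivity #|predC1 (@ord_max n)|; first by apply: eq_card.
by rewrite cardC1 card_ord.
Qed.

Lemma Z_bounds b n :
  cmin b * (#|X|%:R * Lam b ^+ n) <= Zpart J1 J2 J3 J4 J5 b n.+1
  <= Lam b * (#|X|%:R * Lam b ^+ n).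
Proof.
rewrite Zpart_prod (reindex_inj (@psi_inj n)) /= -sumG !mulr_sumr.
have E t : \prod_(m < n.+1) wt b (dif (psi t) m) =
   wt b (dif (psi t) ord_max) * \prod_(m < n.+1 | m != ord_max) wt b (row t m).
  rewrite (bigD1 ord_max) //=; congr (_ * _); apply: eq_bigr => m hm.
  by rewrite dif_psi.
have G0 t : 0 <= \prod_(m < n.+1 | m != ord_max) wt b (row t m).
  by apply: prodr_ge0 => m _; apply/ltW/wt_gt0.
apply/andP; split; apply: ler_sum => t _; rewrite E.
  by apply: ler_wpM2r => //; apply: cmin_le.
by apply: ler_wpM2r => //; apply: wt_le_Lam.
Qed.

Lemma cvg_aux (a k : R) : (fun n : nat => a + k * harmonic n) @ \oo --> a.
Proof.
have := cvgD (cvg_cst a) (cvgMl_tmp (a:=k) (@cvg_harmonic R)).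
rewrite mulr0 addr0 => h; apply: h; exact: eventually_filter.
Qed.

Lemma lnZ_cvg b : (fun M : nat => ln (Zpart J1 J2 J3 J4 J5 b M) / (4 * M%:R)) @ \oo
   --> ln (Lam b) / 4.
Proof.
set K : R := #|X|%:R.
have K0 : 0 < K by rewrite /K ltr0n; apply/card_gt0P; exists [ffun=> false].
have L0 := Lam_gt0 b; have c0 := cmin_gt0 b.
rewrite -cvg_shiftS /=.
apply: (@squeeze_cvgr _ _ _ _
  (fun n => ln (Lam b) / 4 + ((ln (cmin b) + ln K - ln (Lam b)) / 4) * harmonic n)
  (fun n => ln (Lam b) / 4 + (ln K / 4) * harmonic n)); last first.
- exact: cvg_aux.
- exact: cvg_aux.
apply: nearW => n.
have /andP[lo hi] := Z_bounds b n.
have P1 : 0 < K * Lam b ^+ n by rewrite mulr_gt0 // exprn_gt0.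
have Z0 : 0 < Zpart J1 J2 J3 J4 J5 b n.+1 by apply: lt_le_trans lo; rewrite mulr_gt0.
have N0 : (0 : R) < 4 * n.+1%:R by rewrite mulr_gt0 // ltr0n.
rewrite /harmonic /=.
have lo' : ln (cmin b * (K * Lam b ^+ n)) <= ln (Zpart J1 J2 J3 J4 J5 b n.+1).
  by rewrite ler_ln ?posrE ?mulr_gt0 ?exprn_gt0.
have hi' : ln (Zpart J1 J2 J3 J4 J5 b n.+1) <= ln (Lam b * (K * Lam b ^+ n)).
  by rewrite ler_ln ?posrE ?mulr_gt0 ?exprn_gt0.
move: lo' hi'; rewrite !lnM ?posrE ?exprn_gt0 // lnXn //.
have E : (n.+1%:R : R) = n%:R + 1 by rewrite natr1.
rewrite E.
have m0 : (0 : R) < n%:R + 1 by rewrite natr1 ltr0n.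
have m4 : (0 : R) < 4 * (n%:R + 1) by rewrite mulr_gt0.
set a := ln (Lam b); set c := ln (cmin b); set k := ln K; set z := ln _.
move=> h1 h2; rewrite -mulr_natr in h1 h2; apply/andP; split.
- have -> : a / 4 + (c + k - a) / 4 / (n%:R + 1) = (c + (k + a * n%:R)) / (4 * (n%:R + 1)).
    by field; rewrite gt_eqF.
  by rewrite ler_pM2r ?invr_gt0.
- have -> : a / 4 + k / 4 / (n%:R + 1) = (a + (k + a * n%:R)) / (4 * (n%:R + 1)).
    by field; rewrite gt_eqF.
  by rewrite ler_pM2r ?invr_gt0.
Qed.
Definition hX (p : bool * bool * bool * bool) : X :=
  [ffun i : 'I_4 => nth false [:: p.1.1.1; p.1.1.2; p.1.2; p.2] i].

Lemma sgnX a c : sgn (a (+) c) = sgn a * sgn c.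
Proof. by case: a; case: c; rewrite /= ?mulr1 ?mul1r ?mulrNN ?mulr1. Qed.

Lemma En_eval a1 a2 a3 a4 : En (hX (a1, a2, a3, a4)) =
  sgn a1 * J1 + sgn (a1 (+) a2) * J2 + sgn (a1 (+) a3) * J3 + sgn (a2 (+) a3 (+) a4) * J4
  + sgn (a1 (+) a2 (+) a3 (+) a4) * J5
  + sgn a2 * J1 + sgn (a2 (+) a3) * J2 + sgn (a2 (+) a4) * J3 + sgn (a1 (+) a3 (+) a4) * J4
  + sgn (a1 (+) a2 (+) a3 (+) a4) * J5
  + sgn a3 * J1 + sgn (a3 (+) a4) * J2 + sgn (a3 (+) a1) * J3 + sgn (a1 (+) a2 (+) a4) * J4
  + sgn (a1 (+) a2 (+) a3 (+) a4) * J5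
  + sgn a4 * J1 + sgn (a4 (+) a1) * J2 + sgn (a4 (+) a2) * J3 + sgn (a1 (+) a2 (+) a3) * J4
  + sgn (a1 (+) a2 (+) a3 (+) a4) * J5.
Proof.
rewrite /En !big_ord_recr big_ord0 /=.
rewrite !(big_mkcond (fun i => i != _)) /= !big_ord_recr !big_ord0 /= !ffunE /=.
rewrite !sgnX; ring.
Qed.

Lemma expR_sgn e y : expR (sgn e * y) = if e then (expR y)^-1 else expR y.
Proof. by case: e; rewrite /= ?mulN1r ?mul1r ?expRN. Qed.

Lemma sum_pair (A B : finType) (F : A * B -> R) :
  \sum_(p : A * B) F p = \sum_(a : A) \sum_(c : B) F (a, c).
Proof. by rewrite pair_big; apply: eq_bigr => -[a c]. Qed.

Lemma Lam_eval b : Lam b =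
  let p1 := expR (b * J1) in
  let q1 := expR (b * J2) in
  let q2 := expR (2 * b * J3) in
  let u1 := expR (b * J4) in
  let v1 := expR (4 * b * J5) in
  4 * p1 ^+ 2 * u1 ^- 2 * v1 ^-1 + 4 * u1 ^+ 2 * p1 ^- 2 * v1 ^-1
  + 4 * v1 * q2 ^- 2 + 2 * q2 ^+ 2 * v1 * q1 ^- 4
  + q1 ^+ 4 * q2 ^+ 2 * v1 * p1 ^- 4 * u1 ^- 4
  + p1 ^+ 4 * q1 ^+ 4 * q2 ^+ 2 * u1 ^+ 4 * v1.
Proof.
rewrite /Lam (reindex hX) /=; last first.
  apply: onW_bij.
  exists (fun d : X => (d ord0, d (lift ord0 ord0), d (lift ord0 (lift ord0 ord0)),
                        d (lift ord0 (lift ord0 (lift ord0 ord0))))).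
    by move=> [[[a1 a2] a3] a4]; rewrite !ffunE.
  move=> d; apply/ffunP => i; rewrite ffunE.
  case: i => [[|[|[|[|i]]]] Hi] //=; congr (d _); apply: val_inj => //.
rewrite !sum_pair !big_bool /wt !En_eval.
rewrite !mulrDl -!mulrA !expRD !expR_sgn /=.
rewrite !mul1r !(mulrC b).
have h1 := expR_gt0 (J1 * b); have h2 := expR_gt0 (J2 * b); have h3 := expR_gt0 (J3 * b).
have h4 := expR_gt0 (J4 * b); have h5 := expR_gt0 (J5 * b).
move: h1 h2 h3 h4 h5.
set x1 := expR (J1 * b); set x2 := expR (J2 * b); set x3 := expR (J3 * b).
set x4 := expR (J4 * b); set x5 := expR (J5 * b).
move=> h1 h2 h3 h4 h5.
by field; rewrite !gt_eqF.
Qed.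
End A.

Section C.
Variable R : realType.

Lemma is_derive_bigsum (I : Type) (s : seq I) (F : I -> R -> R) dF (x : R) :
  (forall i, is_derive x 1 (F i) (dF i)) ->
  is_derive x 1 (fun y => \sum_(i <- s) F i y) (\sum_(i <- s) dF i).
Proof.
move=> h; elim: s => [|i s IH].
  have -> : (fun y => \sum_(i <- [::]) F i y) = cst 0.
    by apply/funext => y; rewrite big_nil.
  rewrite big_nil; exact: is_derive_cst.
have -> : (fun y => \sum_(j <- i :: s) F j y) = F i + (fun y => \sum_(j <- s) F j y).
  by apply/funext => y; rewrite big_cons.
rewrite big_cons; exact: is_deriveD.
Qed.

Lemma is_derive_lin (c x : R) : is_derive x 1 (fun b : R => c * b) c.
Proof.
have := is_deriveZ c (is_derive_id x (1:R)).
by rewrite /GRing.scale /= mulr1.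
Qed.

Lemma is_derive_expc (c x : R) : is_derive x 1 (fun b : R => expR (c * b)) (c * expR (c * x)).
Proof.
have := is_derive1_comp (is_derive_expR (c * x)) (is_derive_lin c x).
by rewrite mulrC.
Qed.


Variables (I : finType) (e : I -> R).
Definition Lm (b : R) := \sum_(i : I) expR (e i * b).
Definition Lm1 (b : R) := \sum_(i : I) e i * expR (e i * b).
Definition Lm2 (b : R) := \sum_(i : I) e i * (e i * expR (e i * b)).

Lemma is_derive_Lm (b : R) : is_derive b 1 Lm (Lm1 b).
Proof. exact: (is_derive_bigsum _ (fun i => is_derive_expc (e i) b)). Qed.

Lemma is_derive_Lm1 (b : R) : is_derive b 1 Lm1 (Lm2 b).
Proof.
apply: (is_derive_bigsum _ (fun i => _)) => i.
have := is_deriveZ (e i) (is_derive_expc (e i) b).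
by rewrite /GRing.scale /=.
Qed.

Variable kB : R.
Hypothesis kB0 : 0 < kB.
Hypothesis Lpos : forall b, 0 < Lm b.

Definition gb (t : R) : R := 1 / (kB * t).
Definition gb1 (t : R) : R := - (kB * t) ^- 2 * kB.

Lemma is_derive_gb (t : R) : t != 0 -> is_derive t 1 gb (gb1 t).
Proof.
move=> t0.
have h : kB * t != 0 by rewrite mulf_neq0 // gt_eqF.
have := is_deriveV h (is_derive_lin kB t).
have -> : gb = (fun y => (kB * y)^-1) by apply/funext => y; rewrite /gb div1r.
by rewrite /gb1 /GRing.scale /=.
Qed.

Definition qq (t : R) : R := ln (Lm (gb t)) / 4.
Definition qq1 (t : R) : R := 4^-1 * ((Lm (gb t))^-1 * (Lm1 (gb t) * gb1 t)).

Lemma is_derive_qq (t : R) : t != 0 -> is_derive t 1 qq (qq1 t).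
Proof.
move=> t0.
have h1 := is_derive1_comp (is_derive_Lm (gb t)) (is_derive_gb t0).
have h2 := is_derive1_comp (g := Lm \o gb) (x := t) (is_derive1_ln (Lpos (gb t))) h1.
have h3 := is_deriveZ (4^-1) h2.
have -> : qq = 4^-1 \*: (@ln R \o (Lm \o gb)).
  by apply/funext => y; rewrite /qq /= mulrC.
exact: h3.
Qed.

Lemma derivable_qq1 (t : R) : t != 0 -> derivable qq1 t 1.
Proof.
move=> t0.
have hk : kB * t != 0 by rewrite mulf_neq0 // gt_eqF.
have d1 := is_derive1_comp (is_derive_Lm (gb t)) (is_derive_gb t0).
have d2 := is_deriveV (f := Lm \o gb) (x := t) (lt0r_neq0 (Lpos (gb t))) d1.
have d3 := is_derive1_comp (is_derive_Lm1 (gb t)) (is_derive_gb t0).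
have d4 := is_deriveM (is_derive_lin kB t) (is_derive_lin kB t).
have d5 := is_deriveV (f := (fun y => kB * y) * (fun y => kB * y)) (x := t) (mulf_neq0 hk hk) d4.
have d6 := is_deriveM d5 (is_derive_cst kB t 1).
have d7 := is_deriveN d6.
have d8 := is_deriveM d3 d7.
have d9 := is_deriveM d2 d8.
have d10 := is_deriveZ (4^-1) d9.
have -> : qq1 = 4^-1 \*: ((fun y => (Lm (gb y))^-1) * ((Lm1 \o gb) * - ((fun y => (((fun y => kB * y) * (fun y => kB * y)) y)^-1) * cst kB))).
  apply/funext => y; rewrite /qq1 /gb1 /= /GRing.scale /= expr2 mulNr.
  by [].
exact: (@ex_derive _ _ _ _ _ _ _ d10).
Qed.

End C.

Unset Implicit Arguments. Set Strict Implicit.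

Theorem theorem4 (R : realType) (kB J1 J2 J3 J4 J5 T : R) :
  0 < kB -> 0 < T ->
  [/\ lnZ_seq kB J1 J2 J3 J4 J5 T @ \oo --> quarter_ln_lambda kB J1 J2 J3 J4 J5 T,
      free_energy kB J1 J2 J3 J4 J5 T
        = - (kB * T / 4) * ln (lambda_max kB J1 J2 J3 J4 J5 T),
      derivable (fun t => free_energy kB J1 J2 J3 J4 J5 t / t) T 1
      /\ internal_energy kB J1 J2 J3 J4 J5 T
        = kB * T ^+ 2 * derive1 (quarter_ln_lambda kB J1 J2 J3 J4 J5) T &
      derivable (internal_energy kB J1 J2 J3 J4 J5) T 1
      /\ heat_capacity kB J1 J2 J3 J4 J5 T
        = 2 * kB * T * derive1 (quarter_ln_lambda kB J1 J2 J3 J4 J5) T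
          + kB * T ^+ 2 * derive1n 2 (quarter_ln_lambda kB J1 J2 J3 J4 J5) T].
Proof.
move=> kB0 T0.
have lmE t : lambda_max kB J1 J2 J3 J4 J5 t = Lam J1 J2 J3 J4 J5 (betaT kB t).
  by rewrite Lam_eval.
have Lp : forall b, 0 < Lm (En J1 J2 J3 J4 J5) b := Lam_gt0 J1 J2 J3 J4 J5.
set q := quarter_ln_lambda kB J1 J2 J3 J4 J5.
have qE : q = qq (En J1 J2 J3 J4 J5) kB.
  by apply/funext => t; rewrite /q /quarter_ln_lambda lmE.
have cv t : lnZ_seq kB J1 J2 J3 J4 J5 t @ \oo --> q t.
  by rewrite /q /quarter_ln_lambda lmE; exact: lnZ_cvg.
have fe t : free_energy kB J1 J2 J3 J4 J5 t = - kB * t * q t.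
  by rewrite /free_energy (cvg_lim _ (cv t)).
set e := En J1 J2 J3 J4 J5.
have hq (t : R) : t != 0 -> is_derive t 1 q (qq1 e kB t).
  by move=> t0; rewrite qE; exact: is_derive_qq.
have Tn : \forall t \near T, 0 < t := lt_nbhsr T0.
set F := fun t => free_energy kB J1 J2 J3 J4 J5 t / t.
have FE (t : R) : t != 0 -> F t = - kB * q t.
  by move=> t0; rewrite /F fe; field.
have hF (t : R) : 0 < t -> is_derive t 1 F (- kB * qq1 e kB t).
  move=> ht; have h := is_deriveZ (- kB) (hq t (lt0r_neq0 ht)).
  apply: near_eq_is_derive h.
  have := lt_nbhsr ht; apply: filterS => y hy /=.
  by rewrite FE ?gt_eqF.
have dq (t : R) : 0 < t -> derive1 q t = qq1 e kB t.
  by move=> ht; rewrite derive1E (@derive_val _ _ _ _ _ _ _ (hq t (lt0r_neq0 ht))).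
have IE (t : R) : 0 < t -> internal_energy kB J1 J2 J3 J4 J5 t = kB * t ^+ 2 * qq1 e kB t.
  move=> ht; rewrite /internal_energy.
  rewrite -/F derive1E (@derive_val _ _ _ _ _ _ _ (hF t ht)); ring.
have hD := derivableP (derivable_qq1 kB0 Lp (lt0r_neq0 T0)).
set D := 'D_1 (qq1 e kB) T in hD.
have hU := is_deriveM (is_deriveM (is_derive_lin kB T) (is_derive_id T (1:R))) hD.
set U := fun t => kB * t ^+ 2 * qq1 e kB t.
have UE : ((fun t => kB * t) * id) * qq1 e kB = U.
  by apply/funext => t; rewrite /U /= expr2 mulrA.
rewrite UE in hU.
have UI : \forall t \near T, U t = internal_energy kB J1 J2 J3 J4 J5 t.
  by apply: filterS Tn => t ht; rewrite IE.
have hI := near_eq_is_derive UI hU.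
have qD : \forall t \near T, derive1 q t = qq1 e kB t.
  by apply: filterS Tn => t ht; rewrite dq.
split.
- exact: cv.
- by rewrite fe /q /quarter_ln_lambda; field.
- split; first exact: (@ex_derive _ _ _ _ _ _ _ (hF T T0)).
  by rewrite IE // dq.
- split; first exact: (@ex_derive _ _ _ _ _ _ _ hI).
  rewrite /heat_capacity derive1E (@derive_val _ _ _ _ _ _ _ hI).
  rewrite /derive1n /= (derive1E (derive1 q)) (near_eq_derive (1:R) qD) -/D dq //.
  have fT : ((fun t => kB * t) * id) T = kB * T * T by rewrite mulrfctE.
  rewrite /GRing.scale /= /U /e fT; ring.
Qed.
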